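(* Let $\pi_E$ be a deterministic expert policy in a finite MDP whose induced chain $P_E$ is irreducible and aperiodic, with stationary state-action distribution $\rho^E$ and mixing time $\tau_{\mathrm{mix}}$. Let $D$ be the set of state-action pairs visited by an expert trajectory, and $R_{\mathrm{int}}(s,a)=\mathbb{1}\{(s,a)\in D\}$. Let $\pi_I$ be an imitation learner policy whose induced chain is irreducible and aperiodic, with stationary state-action distribution $\rho^I$, and suppose $\mathbb{E}_{\rho^I}[R_{\mathrm{int}}]=1-\kappa$. Then for every reward function $R:S\times A\to[0,1]$, $$\mathbb{E}_{\rho^I}[R]\;\ge\;(1-\kappa)\,\mathbb{E}_{\rho^E}[R]-4\tau_{\mathrm{mix}}\,\kappa.$$
   Context: For a policy $\pi$ in a finite MDP (states $S$, actions $A$, kernel $T$), $P_\pi(s,s')=\sum_a\pi(a\mid s)T(s'\mid s,a)$; if irreducible and aperiodic it has stationary distribution $\rho^\pi_S$, and $\rho^\pi(s,a)=\rho^\pi_S(s)\pi(a\mid s)$; $\mathbb{E}_{\rho}[R]=\sum_{s,a}\rho(s,a)R(s,a)$. Here $P_E=P_{\pi_E}$, $\rho^E=\rho^{\pi_E}$, $\rho^E_S=\rho^{\pi_E}_S$, $\rho^I=\rho^{\pi_I}$. The expert trajectory is generated by running $\pi_E$ in the MDP, so every $(s,a)\in D$ satisfies $\pi_E(a\mid s)=1$. The mixing time $\tau_{\mathrm{mix}}$ is the smallest integer $t\ge0$ with $\max_{s'}\|\mathbb{1}(s')^\top P_E^t-\rho^E_S\|_{\mathrm{TV}}\le\tfrac14$,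 where $\|\rho_1-\rho_2\|_{\mathrm{TV}}=\sup_M|\rho_1(M)-\rho_2(M)|$. *)

(* Defs.v *)
From HB Require Import structures.
From mathcomp Require Import all_boot all_order all_algebra.
Set Implicit Arguments. Unset Strict Implicit. Unset Printing Implicit Defensive.
Import Order.TTheory GRing.Theory Num.Theory.
Local Open Scope ring_scope.

Section MDP.
Variables (R : realFieldType) (S A : finType).

Definition is_distr (T : finType) (p : T -> R) : Prop :=
  (forall x, 0 <= p x) /\ \sum_x p x = 1.

Definition is_kernel (K : S -> A -> S -> R) : Prop :=
  forall s a, is_distr (K s a).

Definition is_policy (pi : S -> A -> R) : Prop :=
  forall s, is_distr (pi s).

Definition det_policy (f : S -> A) : S -> A -> R :=
  fun s a => (a == f s)%:R.

Definition induced_chain (K : S -> A -> S -> R) (pi : S -> A -> R) : S -> S -> R :=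
  fun s s' => \sum_a pi s a * K s a s'.

Fixpoint chain_pow (P : S -> S -> R) (t : nat) : S -> S -> R :=
  match t with
  | 0 => fun s s' => (s == s')%:R
  | t'.+1 => fun s s' => \sum_u chain_pow P t' s u * P u s'
  end.

Definition irreducible (P : S -> S -> R) : Prop :=
  forall s s', exists t, 0 < chain_pow P t s s'.

Definition aperiodic (P : S -> S -> R) : Prop :=
  forall s (d : nat),
    (forall t : nat, (0 < t)%N -> 0 < chain_pow P t s s -> (d %| t)%N) -> d = 1%N.

Definition is_stationary (P : S -> S -> R) (rho : S -> R) : Prop :=
  is_distr rho /\ forall s', \sum_s rho s * P s s' = rho s'.

Definition sa_distr (rhoS : S -> R) (pi : S -> A -> R) : S -> A -> R :=
  fun s a => rhoS s * pi s a.

Definition expect (rho : S -> A -> R) (Rw : S -> A -> R) : R :=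
  \sum_s \sum_a rho s a * Rw s a.

Definition tv_dist (r1 r2 : S -> R) : R :=
  \big[Num.max/0]_(M : {set S}) `|\sum_(x in M) r1 x - \sum_(x in M) r2 x|.

Definition mix_ok (P : S -> S -> R) (rho : S -> R) (t : nat) : Prop :=
  forall s', tv_dist (chain_pow P t s') rho <= 4^-1.

Definition is_mixing_time (P : S -> S -> R) (rho : S -> R) (tau : nat) : Prop :=
  mix_ok P rho tau /\ forall t, mix_ok P rho t -> (tau <= t)%N.

Definition expert_traj (K : S -> A -> S -> R) (f : S -> A) (s0 : S) (tr : seq S) : bool :=
  path (fun s s' => 0 < K s (f s) s') s0 tr.

Definition traj_pairs (f : S -> A) (s0 : S) (tr : seq S) : seq (S * A) :=
  [seq (s, f s) | s <- s0 :: tr].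

Definition R_int (D : seq (S * A)) : S -> A -> R :=
  fun s a => ((s, a) \in D)%:R.

End MDP.

Arguments det_policy {R S A} f s a.
Arguments R_int {R S A} D s a.

(* Main.v *)
Require Import Defs.
From HB Require Import structures.
From mathcomp Require Import all_boot all_order all_algebra.
From mathcomp Require Import ring lra.
Import Order.TTheory GRing.Theory Num.Theory.
Local Open Scope ring_scope.
Section H.
Set Implicit Arguments.
Context {R : realFieldType} {S : finType}.

Definition l1 (x : S -> R) := \sum_s `|x s|.
Definition vm (x : S -> R) (P : S -> S -> R) : S -> R :=
  fun s' => \sum_s x s * P s s'.
Fixpoint it (P : S -> S -> R) (x : S -> R) (n : nat) : S -> R :=
  match n with 0 => x | n'.+1 => vm (it P x n') P end.

Lemma sum_ind (T : finType) (b : T) (f : T -> R) :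
  \sum_a (a == b)%:R * f a = f b.
Proof.
rewrite (bigD1 b) //= eqxx mul1r big1 ?addr0 // => a /negbTE ->.
by rewrite mul0r.
Qed.

Lemma l1_vm (P : S -> S -> R) x : (forall s, is_distr (P s)) -> l1 (vm x P) <= l1 x.
Proof.
move=> hP; rewrite /l1 /vm.
apply: (@le_trans _ _ (\sum_s' \sum_s `|x s| * P s s')).
  apply: ler_sum => s' _; apply: le_trans (ler_norm_sum _ _ _) _.
  by apply: ler_sum => s _; rewrite normrM (ger0_norm (proj1 (hP s) s')).
rewrite exchange_big /=; apply: ler_sum => s _.
by rewrite -mulr_sumr (proj2 (hP s)) mulr1.
Qed.

Lemma l1_it P x n : (forall s, is_distr (P s)) -> l1 (it P x n) <= l1 x.
Proof.
move=> hP; elim: n => [|n IH] //=.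
exact: le_trans (l1_vm _ _ hP) IH.
Qed.

Lemma it_cp P x n s' : it P x n s' = \sum_s x s * chain_pow P n s s'.
Proof.
elim: n s' => [|n IH] s' /=.
  rewrite (bigD1 s') //= eqxx mulr1 big1 ?addr0 // => s /negbTE.
  by rewrite eq_sym => ->; rewrite mulr0.
rewrite /vm.
rewrite (eq_bigr (fun u => \sum_s x s * chain_pow P n s u * P u s')); last first.
  by move=> u _; rewrite IH mulr_suml.
rewrite exchange_big /=; apply: eq_bigr => s _.
by rewrite mulr_sumr; apply: eq_bigr => u _; rewrite mulrA.
Qed.

Lemma it_ext P x y n s : (forall s, x s = y s) -> it P x n s = it P y n s.
Proof.
move=> hxy; elim: n s => [|n IH] s //=.
by rewrite /vm; apply: eq_bigr => u _; rewrite IH.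
Qed.

Lemma it_add P x y n s :
  it P (fun s => x s + y s) n s = it P x n s + it P y n s.
Proof.
elim: n s => [|n IH] s //=.
rewrite /vm -big_split /=; apply: eq_bigr => u _; by rewrite IH mulrDl.
Qed.

Lemma it_shift P x n s : it P (vm x P) n s = it P x n.+1 s.
Proof.
elim: n s => [|n IH] s //=.
by rewrite /vm; apply: eq_bigr => u _; rewrite IH.
Qed.

Lemma iter_id P d nu n s : (forall s, d s = nu s + vm d P s) ->
  d s = \sum_(t < n) it P nu t s + it P d n s.
Proof.
move=> hd; elim: n s => [|n IH] s; first by rewrite big_ord0 add0r.
rewrite IH big_ord_recr /= -addrA; congr (_ + _).
rewrite (@it_ext P d (fun s => nu s + vm d P s) n s hd) it_add; congr (_ + _).
by rewrite it_shift.
Qed.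

Lemma le_bigmax (T : eqType) (r : seq T) (F : T -> R) i :
  i \in r -> F i <= \big[Num.max/0]_(j <- r) F j.
Proof.
elim: r => [|a r IH] //; rewrite in_cons big_cons => /orP [/eqP ->|/IH h].
  by rewrite le_max lexx.
by rewrite le_max h orbT.
Qed.

Lemma tv_ge (r1 r2 : S -> R) (M : {set S}) :
  `|\sum_(x in M) r1 x - \sum_(x in M) r2 x| <= tv_dist r1 r2.
Proof. rewrite /tv_dist. exact: (@le_bigmax _ (index_enum _) (fun M : {set S} => `|\sum_(x in M) r1 x - \sum_(x in M) r2 x|) M (mem_index_enum M)). Qed.

Lemma l1_tv (r1 r2 : S -> R) : \sum_x `|r1 x - r2 x| <= 2%:R * tv_dist r1 r2.
Proof.
set M := [set x | r2 x <= r1 x].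
rewrite (bigID (fun x => x \in M)) /=.
have e1 : \sum_(i | i \in M) `|r1 i - r2 i| = \sum_(i in M) r1 i - \sum_(i in M) r2 i.
  rewrite -sumrB; apply: eq_bigr => i; rewrite inE => h.
  by rewrite ger0_norm // subr_ge0.
have e2 : \sum_(i | i \notin M) `|r1 i - r2 i| =
   - (\sum_(i in ~: M) r1 i - \sum_(i in ~: M) r2 i).
  rewrite -sumrB -sumrN; apply: eq_big => [i|i]; first by rewrite !inE.
  rewrite inE -ltNge => h; by rewrite ltr0_norm // subr_lt0.
rewrite e1 e2 mulr2n mulrDl mul1r.
apply: lerD; first exact: le_trans (ler_norm _) (tv_ge _ _ _).
apply: le_trans (tv_ge r1 r2 (~: M)); by rewrite -normrN ler_norm.
Qed.

Lemma contract (P : S -> S -> R) (pi d : S -> R) n :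
  \sum_s d s = 0 ->
  (forall s', tv_dist (chain_pow P n s') pi <= 4^-1) ->
  2%:R * l1 (it P d n) <= l1 d.
Proof.
move=> hd0 hmix.
have e : forall s', it P d n s' = \sum_s d s * (chain_pow P n s s' - pi s').
  move=> s'; rewrite it_cp.
  under [RHS]eq_bigr => s _ do rewrite mulrBr.
  by rewrite sumrB -mulr_suml hd0 mul0r subr0.
have h1 : l1 (it P d n) <= \sum_s `|d s| * (2%:R * 4^-1).
  rewrite /l1.
  apply: (@le_trans _ _ (\sum_s' \sum_s `|d s| * `|chain_pow P n s s' - pi s'|)).
    apply: ler_sum => s' _; rewrite e; apply: le_trans (ler_norm_sum _ _ _) _.
    by apply: ler_sum => s _; rewrite normrM.
  rewrite exchange_big /=; apply: ler_sum => s _.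
  rewrite -mulr_sumr; apply: ler_wpM2l; first exact: normr_ge0.
  apply: le_trans (l1_tv (chain_pow P n s) pi) _; apply: ler_wpM2l => //; exact: hmix.
move: h1; rewrite -mulr_suml -/(l1 d) => h1.
have h2 : 0 <= l1 d by apply: sumr_ge0 => s _; exact: normr_ge0.
have h4 : (2%:R * 4^-1 : R) = 2^-1 by field.
rewrite h4 in h1.
have : 2%:R * (l1 d * 2^-1) = l1 d :> R by field.
lra.
Qed.
End H.

Theorem lemma7 (R : realFieldType) (S A : finType)
  (K : S -> A -> S -> R) (hK : is_kernel K)
  (fE : S -> A)
  (rhoE_S : S -> R) (tau : nat)
  (hirrE : irreducible (induced_chain K (det_policy fE)))
  (hapE : aperiodic (induced_chain K (det_policy fE)))
  (hstE : is_stationary (induced_chain K (det_policy fE)) rhoE_S)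
  (hmix : is_mixing_time (induced_chain K (det_policy fE)) rhoE_S tau)
  (s0 : S) (tr : seq S) (htr : expert_traj K fE s0 tr)
  (piI : S -> A -> R) (hpiI : is_policy piI) (rhoI_S : S -> R)
  (hirrI : irreducible (induced_chain K piI))
  (hapI : aperiodic (induced_chain K piI))
  (hstI : is_stationary (induced_chain K piI) rhoI_S)
  (kappa : R)
  (hkappa : expect (sa_distr rhoI_S piI) (R_int (traj_pairs fE s0 tr)) = 1 - kappa) :
  forall Rw : S -> A -> R, (forall s a, 0 <= Rw s a <= 1) ->
    expect (sa_distr rhoI_S piI) Rw >=
      (1 - kappa) * expect (sa_distr rhoE_S (det_policy fE)) Rw - 4%:R * tau%:R * kappa.
Proof.
move=> Rw hRw.
set P := induced_chain K (det_policy fE) in hstE hmix *.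
set Q := induced_chain K piI in hstI *.
have hP : forall s s', P s s' = K s (fE s) s'.
  by move=> s s'; rewrite /P /induced_chain /det_policy sum_ind.
have hPd : forall s, is_distr (P s).
  move=> s; split; first by move=> s'; rewrite hP; exact: (hK s (fE s)).1.
  by under eq_bigr => s' _ do rewrite hP; exact: (hK s (fE s)).2.
have [[hmu0 hmu1] hmuQ] := hstI.
have [[hpi0 hpi1] hpiP] := hstE.
have hp01 : forall s a, 0 <= piI s a <= 1.
  move=> s a; have [h0 h1] := hpiI s; rewrite h0 /= -h1.
  rewrite (bigD1 a) //= lerDl; by apply: sumr_ge0 => b _.
set c := \sum_s rhoI_S s * piI s (fE s).
set r := fun s => Rw s (fE s).
have hr : forall s, 0 <= r s <= 1 by move=> s; exact: hRw.
have hc : 1 - kappa <= c.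
  rewrite -hkappa /expect /sa_distr /c; apply: ler_sum => s _.
  rewrite (bigD1 (fE s)) //= big1 ?addr0.
    rewrite /R_int; apply: ler_piMr.
      by apply: mulr_ge0; [exact: hmu0 | by case/andP: (hp01 s (fE s))].
    by case: (_ \in _).
  move=> a ha; rewrite /R_int.
  have -> : (s, a) \in traj_pairs fE s0 tr = false.
    apply/negbTE/negP => /mapP [x _ [e1 e2]].
    by move: ha; rewrite e2 e1 eqxx.
  by rewrite mulr0.
have hc1 : c <= 1.
  rewrite -hmu1 /c; apply: ler_sum => s _.
  apply: ler_piMr; [exact: hmu0 | by case/andP: (hp01 s (fE s))].
have hEI : \sum_s rhoI_S s * piI s (fE s) * r s <= expect (sa_distr rhoI_S piI) Rw.
  rewrite /expect /sa_distr; apply: ler_sum => s _.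
  rewrite (bigD1 (fE s)) //= lerDl; apply: sumr_ge0 => a _.
  apply: mulr_ge0; first apply: mulr_ge0; [exact: hmu0 | by case/andP: (hp01 s a) | by case/andP: (hRw s a)].
have hEE : expect (sa_distr rhoE_S (det_policy fE)) Rw = \sum_s rhoE_S s * r s.
  rewrite /expect /sa_distr /det_policy; apply: eq_bigr => s _.
  under eq_bigr => a _ do rewrite mulrAC mulrC.
  by rewrite sum_ind mulrC.
have hpr : forall s, 0 <= piI s (fE s) by move=> s; case/andP: (hp01 s (fE s)).
have hpr1 : forall s, piI s (fE s) <= 1 by move=> s; case/andP: (hp01 s (fE s)).
have hr0 : forall s, 0 <= r s by move=> s; case/andP: (hr s).
have hr1 : forall s, r s <= 1 by move=> s; case/andP: (hr s).
have hX : \sum_s rhoI_S s * r s - (1 - c) <= \sum_s rhoI_S s * piI s (fE s) * r s.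
  have : \sum_s rhoI_S s * r s - \sum_s rhoI_S s * piI s (fE s) * r s <= 1 - c.
    rewrite -hmu1 /c -!sumrB; apply: ler_sum => s _.
    have h1 : 0 <= 1 - piI s (fE s) by rewrite subr_ge0.
    have h2 : 0 <= 1 - r s by rewrite subr_ge0.
    have h := mulr_ge0 (mulr_ge0 (hmu0 s) h1) h2.
    nra.
  lra.
case: (posnP tau) => [htau0|htau].
  (* tau = 0: single state *)
  have hm0 : mix_ok P rhoE_S 0 by rewrite -htau0; exact: hmix.1.
  have hge : forall s', 1 - rhoE_S s' <= 4^-1.
    move=> s'; have := tv_ge (chain_pow P 0 s') rhoE_S [set s'].
    rewrite !big_set1 /= eqxx => h.
    exact: le_trans (ler_norm _) (le_trans h (hm0 s')).
  have hall : forall s, s = s0.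
    move=> s; apply/eqP; apply/negPn/negP => hne.
    have : rhoE_S s0 + rhoE_S s <= 1.
      rewrite -hpi1 (bigD1 s0) //= (bigD1 s hne) /=.
      rewrite addrA lerDl; apply: sumr_ge0 => x _; exact: hpi0.
    have := hge s0; have := hge s; lra.
  have one : forall F : S -> R, \sum_s F s = F s0.
    move=> F; rewrite (bigD1 s0) //= big1 ?addr0 // => x; by rewrite (hall x) eqxx.
  rewrite one in hEI; rewrite one in hmu1; rewrite /c one in hc.
  rewrite hEE one htau0 mulr0 mul0r subr0.
  have := hr0 s0; have := hpi1; rewrite one => ->.
  rewrite mul1r hmu1 mul1r in hEI *; rewrite hmu1 mul1r in hc.
  move=> h; nra.
pose d := fun s => rhoI_S s - rhoE_S s.
have hd0 : \sum_s d s = 0 by rewrite /d sumrB hmu1 hpi1 subrr.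
pose nu := fun s => d s - vm d P s.
have hid : forall s, d s = nu s + vm d P s by move=> s; rewrite /nu subrK.
have hnu : forall s', nu s' = \sum_s rhoI_S s * (Q s s' - P s s').
  move=> s'; rewrite /nu /d /vm.
  under eq_bigr => s _ do rewrite mulrBl.
  rewrite sumrB.
  under [RHS]eq_bigr => s _ do rewrite mulrBr.
  rewrite sumrB hmuQ (hpiP s'); ring.
have hrow : forall s, \sum_s' `|Q s s' - P s s'| <= 2%:R * (1 - piI s (fE s)).
  move=> s.
  have e : forall s', Q s s' - P s s' = \sum_a piI s a * (K s a s' - K s (fE s) s').
    move=> s'; rewrite hP /Q /induced_chain.
    under [RHS]eq_bigr => a _ do rewrite mulrBr.
    by rewrite sumrB -mulr_suml (hpiI s).2 mul1r.
  apply: (@le_trans _ _ (\sum_s' \sum_a piI s a * `|K s a s' - K s (fE s) s'|)).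
    apply: ler_sum => s' _; rewrite e; apply: le_trans (ler_norm_sum _ _ _) _.
    apply: ler_sum => a _; rewrite normrM ger0_norm //; by case/andP: (hp01 s a).
  rewrite exchange_big /= (bigD1 (fE s)) //=.
  rewrite big1 ?add0r; last by move=> s' _; rewrite subrr normr0 mulr0.
  have e1 : 1 - piI s (fE s) = \sum_(a | a != fE s) piI s a.
    by rewrite -(hpiI s).2 (bigD1 (fE s)) //= addrC addrK.
  rewrite e1 mulr_sumr; apply: ler_sum => a _; rewrite -mulr_sumr mulrC.
  apply: ler_wpM2r; first by case/andP: (hp01 s a).
  apply: (@le_trans _ _ (\sum_s' (K s a s' + K s (fE s) s'))).
    apply: ler_sum => s' _; apply: le_trans (ler_normB _ _) _.
    rewrite !ger0_norm //; [exact: (hK s (fE s)).1 | exact: (hK s a).1].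
  rewrite big_split /= (hK s a).2 (hK s (fE s)).2; lra.
have hl1nu : l1 nu <= 2%:R * (1 - c).
  rewrite /l1; apply: (@le_trans _ _ (\sum_s' \sum_s rhoI_S s * `|Q s s' - P s s'|)).
    apply: ler_sum => s' _; rewrite hnu; apply: le_trans (ler_norm_sum _ _ _) _.
    by apply: ler_sum => s _; rewrite normrM (ger0_norm (hmu0 s)).
  rewrite exchange_big /=.
  apply: (@le_trans _ _ (\sum_s rhoI_S s * (2%:R * (1 - piI s (fE s))))).
    apply: ler_sum => s _; rewrite -mulr_sumr; apply: ler_wpM2l => //; exact: hrow.
  have -> : \sum_s rhoI_S s * (2%:R * (1 - piI s (fE s))) = 2%:R * (\sum_s rhoI_S s - c).
    rewrite /c mulrBr !mulr_sumr -sumrB; apply: eq_bigr => s _; ring.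
  by rewrite hmu1.
have hL : l1 d <= tau%:R * l1 nu + l1 (it P d tau).
  rewrite {1}/l1; apply: (@le_trans _ _ (\sum_s (\sum_(t < tau) `|it P nu t s| + `|it P d tau s|))).
    apply: ler_sum => s _; rewrite (@iter_id _ _ P d nu tau s hid).
    apply: le_trans (ler_normD _ _) _; apply: lerD; [exact: ler_norm_sum | exact: lexx].
  rewrite big_split /= exchange_big /=; apply: lerD => //.
  apply: (@le_trans _ _ (\sum_(t < tau) l1 nu)).
    apply: ler_sum => t _; exact: (@l1_it _ _ P nu t hPd).
  by rewrite sumr_const card_ord mulr_natl.
have hcon := @contract _ _ P rhoE_S d tau hd0 hmix.1.
have hsd : (\sum_s rhoE_S s * r s - \sum_s rhoI_S s * r s) * 2%:R <= l1 d.
  have e : forall s, (rhoE_S s * r s - rhoI_S s * r s) * 2%:R = - d s * (2%:R * r s - 1) - d s.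
    by move=> s; rewrite /d; ring.
  rewrite -sumrB mulr_suml (eq_bigr _ (fun s _ => e s)) sumrB hd0 subr0.
  apply: ler_sum => s _.
  have := hr0 s; have := hr1 s.
  case: (lerP 0 (d s)) => hds; [rewrite ger0_norm // | rewrite ltr0_norm //]; nra.
have hEE0 : 0 <= \sum_s rhoE_S s * r s.
  by apply: sumr_ge0 => s _; apply: mulr_ge0.
have ht : 1 <= tau%:R :> R by rewrite ler1n.
have hk0 : 0 <= kappa by lra.
rewrite hEE.
have h1 : 0 <= tau%:R * (2%:R * (1 - c) - l1 nu).
  apply: mulr_ge0; lra.
have h2 : 0 <= tau%:R * (kappa - (1 - c)) by apply: mulr_ge0; lra.
have h3 : 0 <= (tau%:R - 1) * (1 - c) by apply: mulr_ge0; lra.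
have h4 : 0 <= kappa * \sum_s rhoE_S s * r s by apply: mulr_ge0.
have h5 : 0 <= tau%:R * (1 - c) by apply: mulr_ge0; lra.
nra.
Qed.
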